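(* Let $P$ be a uniform-length histogram polygon with contact tree $T$. Then the base rectangle of $P$ is orientation-fixed with every rectangle on the left spine and on the right spine of $T$.
   Context: Two points $p,q$ of a polygon $P$ see each other if the segment $pq$ does not intersect the exterior of $P$ (visibility along edges and through vertices allowed). A uniform-length histogram polygon is an orthogonal simple polygon with a distinguished horizontal base edge such that $P$ lies above the base edge and is monotone with respect to it, all other boundary edges have the same length, and no three consecutive boundary vertices are collinear; its boundary apart from the base edge is a chain of alternating up- and down-staircases. Every vertical boundary edge on an up-staircase has a companion vertical boundary edge on a down-staircase spanning the same heights such that their four endpoints are the corners of an axis-aligned rectangle inside $P$; these rectangles decompose $P$. The two upper corners of a rectangle are its top vertices and the two lower corners its bottom vertices. The contact tree $T$ has one node per rectangle, two nodes adjacent iff the rectangles touch along a segment of positive length, rooted at the base rectangle (the one containing the base edge); leaves correspond to the rectangles containing tabs (top horizontal boundary edges with two convex endpoints), ordered left to right by position. The left (right) spine of $T$ is the path from the root to the leftmost (rightmost) leaf. Two distinct rectangles $R_1,R_2$ are orientation-fixed if a bottom vertex of one of them sees a top vertex of the other. *)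

(* Defs.v *)
From HB Require Import structures.
From mathcomp Require Import all_boot all_order all_algebra.
From mathcomp Require Import reals.
Set Implicit Arguments. Unset Strict Implicit. Unset Printing Implicit Defensive.
Import Order.TTheory GRing.Theory Num.Theory.

(* A uniform-length histogram polygon (up to a rigid motion) is encoded by the
   sequence hs of its column heights: base edge [0, a*n] x {0}, column m is
   [a*m, a*(m+1)] x [0, a*hs_m], with common edge length a > 0. *)

Definition hgt (hs : seq nat) (m : nat) : nat := nth 0 hs m.
Definition hleft (hs : seq nat) (m : nat) : nat :=
  if m is m'.+1 then hgt hs m' else 0.

(* all non-base edges have length a (one unit), no three consecutive collinear
   vertices, histogram over the base: heights >= 1, start and end at 1,
   consecutive heights differ by exactly 1. *)
Definition ulhist (hs : seq nat) : bool :=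
  [&& 0 < size hs, all (fun h => 0 < h) hs, hgt hs 0 == 1,
      hgt hs (size hs).-1 == 1 &
      all (fun m => (hgt hs m.+1 == (hgt hs m).+1) || (hgt hs m == (hgt hs m.+1).+1))
          (iota 0 (size hs).-1)].

(* rectangles: (left abscissa, right abscissa, level k), spanning heights [k,k+1] *)
Definition rect := (nat * nat * nat)%type.
Definition rL (r : rect) : nat := r.1.1.
Definition rR (r : rect) : nat := r.1.2.
Definition rlev (r : rect) : nat := r.2.

(* vertical boundary edge from (i,k) to (i,k+1) on an up-staircase *)
Definition up_edge (hs : seq nat) i k := (hleft hs i == k) && (hgt hs i == k.+1).
(* vertical boundary edge from (j,k) to (j,k+1) on a down-staircase *)
Definition down_edge (hs : seq nat) j k := (hgt hs j == k) && (hleft hs j == k.+1).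

(* [i,j] x [k,k+1] is a rectangle of the decomposition: its vertical sides are
   companion up/down boundary edges and it lies inside P *)
Definition is_rect (hs : seq nat) (r : rect) : bool :=
  [&& rL r < rR r, up_edge hs (rL r) (rlev r), down_edge hs (rR r) (rlev r) &
      all (fun m => rlev r < hgt hs m) (index_iota (rL r) (rR r))].

Definition base_rect (hs : seq nat) (r : rect) : bool :=
  [&& rL r == 0, rR r == size hs & rlev r == 0].

(* touching along a segment of positive length *)
Definition touch (r1 r2 : rect) : bool :=
  ((((rlev r1).+1 == rlev r2) || ((rlev r2).+1 == rlev r1))
     && (maxn (rL r1) (rL r2) < minn (rR r1) (rR r2)))
  || ((rlev r1 == rlev r2) && ((rR r1 == rL r2) || (rR r2 == rL r1))).

(* tab: top horizontal edge of column m with two convex endpoints *)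
Definition is_tab (hs : seq nat) m : bool :=
  [&& m < size hs, hleft hs m < hgt hs m & hgt hs m.+1 < hgt hs m].

Definition contains_tab (hs : seq nat) (r : rect) m : bool :=
  [&& is_tab hs m, rL r <= m < rR r & hgt hs m == (rlev r).+1].

Definition leftmost_tab (hs : seq nat) m : bool :=
  is_tab hs m && all (fun m' => ~~ is_tab hs m') (iota 0 m).
Definition rightmost_tab (hs : seq nat) m : bool :=
  is_tab hs m && all (fun m' => ~~ is_tab hs m') (iota m.+1 (size hs - m.+1)).

(* r lies on the (simple) path in the contact tree from root r0 to the leaf
   rectangle containing a tab m satisfying `which` *)
Definition on_spine (which : seq nat -> nat -> bool) (hs : seq nat) (r0 r : rect) : Prop :=
  exists (m : nat) (L : rect) (s : seq rect),
    [/\ which hs m, is_rect hs L & contains_tab hs L m] /\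
    [/\ all (is_rect hs) s, path touch r0 s, last r0 s = L,
        uniq (r0 :: s) & r \in r0 :: s].

Definition on_left_spine := on_spine leftmost_tab.
Definition on_right_spine := on_spine rightmost_tab.

Local Open Scope ring_scope.

Definition region (R : realType) (a : R) (hs : seq nat) (p : R * R) : Prop :=
  exists2 m : nat, (m < size hs)%N &
    (a * m%:R <= p.1 <= a * m.+1%:R) /\ (0 <= p.2 <= a * (hgt hs m)%:R).

Definition sees (R : realType) (a : R) (hs : seq nat) (p q : R * R) : Prop :=
  forall t : R, 0 <= t <= 1 ->
    region a hs ((1 - t) * p.1 + t * q.1, (1 - t) * p.2 + t * q.2).

Definition pt (R : realType) (a : R) (x y : nat) : R * R := (a * x%:R, a * y%:R).

Definition bottom_vertices (R : realType) (a : R) (r : rect) : seq (R * R) :=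
  [:: pt a (rL r) (rlev r); pt a (rR r) (rlev r)].
Definition top_vertices (R : realType) (a : R) (r : rect) : seq (R * R) :=
  [:: pt a (rL r) (rlev r).+1; pt a (rR r) (rlev r).+1].

Definition orientation_fixed (R : realType) (a : R) (hs : seq nat) (r1 r2 : rect) : Prop :=
  (exists b t, [/\ b \in bottom_vertices a r1, t \in top_vertices a r2 & sees a hs b t])
  \/ (exists b t, [/\ b \in bottom_vertices a r2, t \in top_vertices a r1 & sees a hs b t]).

(* Main.v *)
Require Import Defs.
From HB Require Import structures.
From mathcomp Require Import all_boot all_order all_algebra.
From mathcomp Require Import reals.
From mathcomp Require Import ring lra zify.
Import Order.TTheory GRing.Theory Num.Theory.

Lemma hgt_pos_size hs c : (0 < hgt hs c)%N -> (c < size hs)%N.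
Proof. move=> h; case: (ltnP c (size hs)) => // h'; move: h; rewrite /hgt nth_default //. Qed.

Lemma hleft_pred hs i : (0 < i)%N -> hleft hs i = hgt hs i.-1.
Proof. by case: i. Qed.

Lemma left_heights hs m : ulhist hs -> leftmost_tab hs m ->
  forall c, (c <= m)%N -> hgt hs c = c.+1 /\ hleft hs c = c.
Proof.
move=> /and5P[sz pos h0 hn steps] /andP[tabm notab].
have msz : (m < size hs)%N by case/and3P: tabm.
elim=> [|c IH] le; first by split => //; apply/eqP.
have [IH1 IH2] := IH (ltnW le).
have ntab : ~~ is_tab hs c by move/allP: notab; apply; rewrite mem_iota; lia.
have st: (hgt hs c.+1 == (hgt hs c).+1) || (hgt hs c == (hgt hs c.+1).+1).
  by move/allP: steps; apply; rewrite mem_iota; lia.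
have csz: (c < size hs)%N by lia.
move: ntab; rewrite /is_tab csz IH1 IH2 ltnSn => ntab.
split; last by rewrite /= IH1.
move: st ntab; rewrite IH1; lia.
Qed.

Lemma right_heights hs m : ulhist hs -> rightmost_tab hs m ->
  forall c, (m <= c)%N -> hgt hs c = size hs - c.
Proof.
move=> /and5P[sz pos h0 hn steps] /andP[tabm notab].
set n := size hs.
have msz : (m < n)%N by case/and3P: tabm.
have hn0 : forall c, (n <= c)%N -> hgt hs c = 0%N by move=> c hc; rewrite /hgt nth_default.
have key : forall k, (k <= n - m)%N -> hgt hs (n - k) = k /\ hgt hs (n - k).+1 = k.-1.
  elim=> [|k IH] hk; first by rewrite subn0 !hn0.
  have [IH1 IH2] := IH (ltnW hk).
  case: k IH IH1 IH2 hk => [|k] IH IH1 IH2 hk.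
    have e1 : (n - 1 = n.-1)%N by lia.
    have e2 : ((n - 1).+1 = n)%N by lia.
    rewrite e1 (eqP hn) -e1 e2 hn0 //.
  set p := (n - k.+1)%N.
  have ep : (n - k.+2 = p.-1)%N by rewrite /p; lia.
  have ep2 : ((n - k.+2).+1 = p)%N by rewrite /p; lia.
  rewrite ep2 ep; split => //.
  have ntab : ~~ is_tab hs p by move/allP: notab; apply; rewrite mem_iota /p; lia.
  have st: (hgt hs p.-1.+1 == (hgt hs p.-1).+1) || (hgt hs p.-1 == (hgt hs p.-1.+1).+1).
    by move/allP: steps; apply; rewrite mem_iota /p; lia.
  have ep3 : (p.-1.+1 = p)%N by rewrite /p; lia.
  rewrite ep3 IH1 in st.
  have pp : (0 < p)%N by rewrite /p; lia.
  move: ntab; rewrite /is_tab IH1 IH2 hleft_pred //.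
  have -> : (p < size hs)%N by rewrite /p; lia.
  move: st; lia.
move=> c hc; case: (leqP n c) => hcn; first by rewrite hn0 //; lia.
have := key (n - c)%N; rewrite subKn; last by lia.
by case => //; lia.
Qed.

Set Implicit Arguments. Unset Strict Implicit. Unset Printing Implicit Defensive.

Lemma rect_in hs r c : is_rect hs r -> (rL r <= c < rR r)%N -> (rlev r < hgt hs c)%N.
Proof. by case/and4P => _ _ _ /allP al hc; apply: al; rewrite mem_index_iota. Qed.

Lemma rect_facts hs r : is_rect hs r ->
  [/\ (rL r < rR r)%N, hleft hs (rL r) = rlev r, hgt hs (rL r) = (rlev r).+1,
      hgt hs (rR r) = rlev r & hleft hs (rR r) = (rlev r).+1].
Proof.
by case/and4P => lt /andP[/eqP a /eqP b] /andP[/eqP c /eqP d] _.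
Qed.

Lemma same_level_eq hs p q c : is_rect hs p -> is_rect hs q -> rlev p = rlev q ->
  (rL p <= c < rR p)%N -> (rL q <= c < rR q)%N -> p = q.
Proof.
move=> vp vq el hp hq.
have [p1 p2 p3 p4 p5] := rect_facts vp.
have [q1 q2 q3 q4 q5] := rect_facts vq.
have eL : rL p = rL q.
  case: (ltngtP (rL p) (rL q)) => // h.
  - have := rect_in vp (c := (rL q).-1); rewrite -hleft_pred; last by lia.
    rewrite q2; lia.
  - have := rect_in vq (c := (rL p).-1); rewrite -hleft_pred; last by lia.
    rewrite p2; lia.
have eR : rR p = rR q.
  case: (ltngtP (rR p) (rR q)) => // h.
  - have := rect_in vq (c := rR p); rewrite p4; lia.
  - have := rect_in vp (c := rR q); rewrite q4; lia.
move: eL eR el; case: p {vp hp p1 p2 p3 p4 p5} => [[? ?] ?]; case: q {vq hq q1 q2 q3 q4 q5} => [[? ?] ?].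
by rewrite /rL /rR /rlev /= => -> -> ->.
Qed.

Lemma child_contained hs p y : is_rect hs p -> is_rect hs y -> rlev y = (rlev p).+1 ->
  (maxn (rL p) (rL y) < minn (rR p) (rR y))%N -> (rL p <= rL y)%N && (rR y <= rR p)%N.
Proof.
move=> vp vy el ov.
have [p1 p2 p3 p4 p5] := rect_facts vp.
have [q1 q2 q3 q4 q5] := rect_facts vy.
apply/andP; split.
  case: (leqP (rL p) (rL y)) => // h.
  have := rect_in vy (c := (rL p).-1); rewrite -hleft_pred; last by lia.
  rewrite p2; lia.
case: (leqP (rR y) (rR p)) => // h.
have := rect_in vy (c := rR p); rewrite p4; lia.
Qed.

Lemma touch_valid hs p q : is_rect hs p -> is_rect hs q -> touch p q ->
  ((rlev p).+1 = rlev q \/ (rlev q).+1 = rlev p) /\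
  (maxn (rL p) (rL q) < minn (rR p) (rR q))%N.
Proof.
move=> vp vq.
have [p1 p2 p3 p4 p5] := rect_facts vp.
have [q1 q2 q3 q4 q5] := rect_facts vq.
case/orP => [/andP[/orP[/eqP h|/eqP h] ov]|/andP[/eqP e /orP[/eqP h|/eqP h]]].
- by split => //; left.
- by split => //; right.
- move: p4 q3; rewrite h e; lia.
- move: q4 p3; rewrite h e; lia.
Qed.

Definition contains (p q : rect) := (rL p <= rL q)%N && (rR q <= rR p)%N.

Lemma path_contain hs : forall s x, all (is_rect hs) (x :: s) -> path touch x s ->
  uniq (x :: s) ->
  (forall z, z \in s -> touch x z -> (rlev z).+1 = rlev x -> False) ->
  forall y, y \in x :: s -> contains y (last x s).
Proof.
elim=> [|y0 s IH] x.
  by move=> _ _ _ _ y; rewrite inE => /eqP ->; rewrite /contains !leqnn.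
rewrite /= => /and3P[vx vy0 vs] /andP[txy0 ps] /andP[nx us] hpar.
have [[h|h] ov] := touch_valid vx vy0 txy0; last first.
  by exfalso; apply: (hpar y0); rewrite ?inE ?eqxx.
have cx : contains x y0 by apply: (child_contained vx vy0); rewrite // -h.
have IH' := IH y0 (introT andP (conj vy0 vs)) ps us.
have IH'' : forall y, y \in y0 :: s -> contains y (last y0 s).
  apply: IH' => z zs tz ez.
  have vz : is_rect hs z by move/allP: vs; apply.
  have [_ ov'] := touch_valid vy0 vz tz.
  have cz : contains z y0.
    apply: (child_contained vz vy0); first by rewrite ez.
    by rewrite maxnC minnC.
  have [y1 _ _ _ _] := rect_facts vy0.
  have ezx : z = x.
    apply: (same_level_eq (c := rL y0) vz vx).
    - by apply/eqP; rewrite -eqSS ez h.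
    - by move: cz y1; rewrite /contains => /andP[c1 c2] y1; rewrite c1 (leq_trans y1 c2).
    - by move: cx y1; rewrite /contains => /andP[c1 c2] y1; rewrite c1 (leq_trans y1 c2).
  by move: nx; rewrite inE negb_or -ezx zs andbF.
move=> y; rewrite inE => /orP[/eqP ->|hy]; last by apply: IH''.
have := IH'' y0 (mem_head _ _); move: cx; rewrite /contains; lia.
Qed.

Section Vis.
Local Open Scope ring_scope.

Lemma floor_ex (R : realType) (lo hi : nat) (s : R) : (lo < hi)%N ->
  lo%:R <= s -> s <= hi%:R ->
  exists c : nat, [/\ (lo <= c < hi)%N, c%:R <= s & s <= c.+1%:R].
Proof.
elim: hi => [|hi IH] //= hlo h1 h2.
case: (leqP hi lo) => hl.
  have e : lo = hi by apply/eqP; rewrite eqn_leq hl -ltnS hlo.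
  by exists hi; split => //; [rewrite e leqnn ltnSn | rewrite -e].
case: (lerP s hi%:R) => hs.
  have [c [/andP[c1 c2] c3 c4]] := IH hl h1 hs.
  by exists c; split => //; rewrite c1 ltnS ltnW.
exists hi; split => //; first by rewrite (ltnW hl) ltnSn.
exact: ltW.
Qed.

Lemma see_left (R : realType) (a : R) hs j k : 0 < a -> (k < j)%N ->
  (forall c, (c < j)%N -> (minn c.+1 k.+1 <= hgt hs c)%N) ->
  sees a hs (pt a 0 0) (pt a j k.+1).
Proof.
move=> a0 kj H t /andP[t0 t1].
have jpos : (0 < j)%N by lia.
have J0 : (0 : R) <= j%:R by rewrite ler0n.
have tj0 : 0 <= t * j%:R by apply: mulr_ge0.
have tj1 : 0 <= (1 - t) * j%:R by apply: mulr_ge0 => //; lra.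
have [c [/andP[_ cj] c1 c2]] := floor_ex (s := t * j%:R) jpos
  (ltac:(rewrite mulr0n; lra)) (ltac:(lra)).
exists c.
  by apply: hgt_pos_size; have := H c cj; lia.
have hc : t * k.+1%:R <= (hgt hs c)%:R.
  have KJ : (k.+1%:R <= j%:R :> R) by rewrite ler_nat.
  case: (leqP c.+1 k.+1) => hck.
    have e : minn c.+1 k.+1 = c.+1 by apply/minn_idPl.
    have h1 := H c cj; rewrite e in h1.
    have : (c.+1%:R <= (hgt hs c)%:R :> R) by rewrite ler_nat.
    have : 0 <= t * (j%:R - k.+1%:R) by apply: mulr_ge0 => //; lra.
    lra.
  have e : minn c.+1 k.+1 = k.+1 by apply/minn_idPr; lia.
  have h1 := H c cj; rewrite e in h1.
  have : (k.+1%:R <= (hgt hs c)%:R :> R) by rewrite ler_nat.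
  have : (0 : R) <= k.+1%:R by rewrite ler0n.
  have : 0 <= (1 - t) * k.+1%:R by apply: mulr_ge0; [lra | rewrite ler0n].
  lra.
have K0 : (0 : R) <= k.+1%:R by rewrite ler0n.
rewrite /pt /= mulr0n !mulr0 !add0r !(mulrCA t a); split; apply/andP; split.
- by rewrite ler_pM2l.
- by rewrite ler_pM2l.
- exact: mulr_ge0 (ltW a0) (mulr_ge0 t0 K0).
- by rewrite ler_pM2l.
Qed.

Lemma see_right (R : realType) (a : R) hs i k : 0 < a -> (i + k.+1 <= size hs)%N ->
  (forall c, (i <= c < size hs)%N -> (minn (size hs - c) k.+1 <= hgt hs c)%N) ->
  sees a hs (pt a (size hs) 0) (pt a i k.+1).
Proof.
move=> a0 ikn H t /andP[t0 t1].
set n := size hs in ikn H *.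
have lt : (i < n)%N by lia.
have I0 : (0 : R) <= i%:R by rewrite ler0n.
have IN : (i%:R <= n%:R :> R) by rewrite ler_nat; lia.
have f1 : 0 <= (1 - t) * (n%:R - i%:R) by apply: mulr_ge0; lra.
have f2 : 0 <= t * (n%:R - i%:R) by apply: mulr_ge0; lra.
have [c [/andP[ic cn] c1 c2]] := floor_ex (s := (1 - t) * n%:R + t * i%:R) lt
  (ltac:(lra)) (ltac:(lra)).
exists c => //.
have hc : t * k.+1%:R <= (hgt hs c)%:R.
  have KJ : (k.+1%:R <= n%:R - i%:R :> R).
    rewrite lerBrDr -natrD ler_nat; lia.
  have cn' : (n - c)%:R = n%:R - c%:R :> R by rewrite natrB //; lia.
  case: (leqP (n - c) k.+1) => hck.
    have e : minn (n - c) k.+1 = (n - c)%N by apply/minn_idPl.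
    have h1 := H c (ltac:(lia)); rewrite e in h1.
    have : ((n - c)%:R <= (hgt hs c)%:R :> R) by rewrite ler_nat.
    have : 0 <= t * (n%:R - i%:R - k.+1%:R) by apply: mulr_ge0; lra.
    rewrite cn'; lra.
  have e : minn (n - c) k.+1 = k.+1 by apply/minn_idPr; lia.
  have h1 := H c (ltac:(lia)); rewrite e in h1.
  have : (k.+1%:R <= (hgt hs c)%:R :> R) by rewrite ler_nat.
  have : (0 : R) <= k.+1%:R by rewrite ler0n.
  have : 0 <= (1 - t) * k.+1%:R by apply: mulr_ge0; [lra | rewrite ler0n].
  lra.
have K0 : (0 : R) <= k.+1%:R by rewrite ler0n.
have e1 : (1 - t) * (a * n%:R) + t * (a * i%:R) = a * ((1 - t) * n%:R + t * i%:R) by ring.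
rewrite /pt /= mulr0n !mulr0 add0r e1 (mulrCA t a); split; apply/andP; split.
- by rewrite ler_pM2l.
- by rewrite ler_pM2l.
- exact: mulr_ge0 (ltW a0) (mulr_ge0 t0 K0).
- by rewrite ler_pM2l.


Qed.

End Vis.
Unset Implicit Arguments. Set Strict Implicit. Set Printing Implicit Defensive.

Theorem lemma14 (R : realType) (a : R) (hs : seq nat) (r0 r : rect) :
  (0 < a)%R -> ulhist hs -> is_rect hs r0 -> base_rect hs r0 ->
  (on_left_spine hs r0 r \/ on_right_spine hs r0 r) -> r <> r0 ->
  orientation_fixed a hs r0 r.
Proof.
move=> a0 uh vr0 /and3P[/eqP b1 /eqP b2 /eqP b3] sp _.
have gen : forall (which : seq nat -> nat -> bool) m L s,
    [/\ which hs m, is_rect hs L & contains_tab hs L m] /\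
    [/\ all (is_rect hs) s, path touch r0 s, last r0 s = L,
        uniq (r0 :: s) & r \in r0 :: s] ->
    is_rect hs r /\ (rL r <= m < rR r)%N.
  move=> which m L s [[_ vL cL] [vs ps ls us rs]].
  have va : all (is_rect hs) (r0 :: s) by rewrite /= vr0 vs.
  have hp : forall z, z \in s -> touch r0 z -> (rlev z).+1 = rlev r0 -> False.
    by move=> z _ _; rewrite b3.
  have := path_contain va ps us hp rs; rewrite ls => /andP[c1 c2]; split; first by move/allP: va; apply.
  by move: cL => /and3P[_ /andP[d1 d2] _]; rewrite (leq_trans c1 d1) (leq_trans d2 c2).
left.
case: sp => [[m [L [s [[wm vL cL] P]]]] | [m [L [s [[wm vL cL] P]]]]].
- have [vr /andP[hm1 hm2]] := gen _ _ _ _ (conj (And3 wm vL cL) P).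
  have [p1 p2 p3 p4 p5] := rect_facts vr.
  have LH := @left_heights hs m uh wm.
  exists (pt a 0 0), (pt a (rR r) (rlev r).+1); split.
  + by rewrite /bottom_vertices b1 b3 mem_head.
  + by rewrite /top_vertices; exact: (mem_last _ [:: _]).
  apply: see_left => //.
    case: (posnP (rL r)) => h0.
      by move: p2; rewrite h0 /= => <-; rewrite -h0.
    move: p2; rewrite hleft_pred //.
    have [-> _] := LH (rL r).-1 (ltac:(lia)).
    lia.
  move=> c cj; case: (ltnP c (rL r)) => hc.
    have [-> _] := LH c (ltac:(lia)); exact: geq_minl.
  have := rect_in vr (c := c) (ltac:(lia)) => h.
  exact: leq_trans (geq_minr _ _) h.
- have [vr /andP[hm1 hm2]] := gen _ _ _ _ (conj (And3 wm vL cL) P).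
  have [p1 p2 p3 p4 p5] := rect_facts vr.
  have RH := @right_heights hs m uh wm.
  exists (pt a (size hs) 0), (pt a (rL r) (rlev r).+1); split.
  + by rewrite /bottom_vertices b2 b3; exact: (mem_last _ [:: _]).
  + by rewrite /top_vertices mem_head.
  apply: see_right => //.
    move: p5; rewrite hleft_pred; last by lia.
    rewrite RH; last by lia.
    lia.
  move=> c /andP[ic cn]; case: (leqP (rR r) c) => hc.
    rewrite RH; last by lia.
    exact: geq_minl.
  have := rect_in vr (c := c) (ltac:(lia)) => h.
  exact: leq_trans (geq_minr _ _) h.
Qed.
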